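(* For any sample $(x,u)$, generative parameters $\theta=(f,T,\lambda)$, inference parameters $\phi$, and $\alpha\in[0,1]$, $$\mathrm{ELBO}_{\theta,\phi}(\alpha;x,u)=\alpha\,\mathrm{ELBO}_{\theta,\phi}(1;x,u)+(1-\alpha)\,\mathrm{ELBO}_{\theta,\phi}(0;x,u)+\alpha\,\mathcal{D}^{1-\alpha}_{\mathrm{Skew}}\big(q_\phi(\cdot|x)\,\|\,q_\phi(\cdot|x,u)\big)+(1-\alpha)\,\mathcal{D}^{\alpha}_{\mathrm{Skew}}\big(q_\phi(\cdot|x,u)\,\|\,q_\phi(\cdot|x)\big),$$ where $\mathcal{D}^{\beta}_{\mathrm{Skew}}(p\|q):=\mathcal{D}_{\mathrm{KL}}\big(p\,\|\,(1-\beta)p+\beta q\big)$.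
   Context: Observations $x\in\mathbb{R}^{d_X}$, covariates $u\in\mathbb{R}^{d_U}$, latents $z\in\mathbb{R}^{d_Z}$, $d_Z<d_X$. Generative parameters $\theta=(f,T,\lambda)$: mixing function $f:\mathbb{R}^{d_Z}\to\mathbb{R}^{d_X}$, label prior density $p_{T,\lambda}(z|u)=\prod_{i=1}^{d_Z}\exp(\lambda_i(u)\cdot T_i(z_i)-A(u)+B(z_i))$ (conditionally factorial exponential family with known $A,B$), decoder density $p_f(x|z)=p_\epsilon(x-f(z))$ for a fixed noise density $p_\epsilon$. Inference parameters $\phi$ determine an encoder density $q_\phi(z|x)$ and a posterior density $q_\phi(z|x,u)$ on $\mathbb{R}^{d_Z}$. For $\alpha\in[0,1]$, with $m_\alpha=\alpha q_\phi(\cdot|x)+(1-\alpha)q_\phi(\cdot|x,u)$, $\mathrm{ELBO}_{\theta,\phi}(\alpha;x,u)=\mathbb{E}_{z\sim m_\alpha}\log p_f(x|z)-\mathcal{D}_{\mathrm{KL}}(m_\alpha\|p_{T,\lambda}(\cdot|u))$. All expectations and divergences appearing are assumed finite. *)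

(* Defs.v *)
From HB Require Import structures.
From mathcomp Require Import all_boot all_order all_algebra.
From mathcomp Require Import all_classical all_reals all_analysis.
Set Implicit Arguments. Unset Strict Implicit. Unset Printing Implicit Defensive.
Import Order.TTheory GRing.Theory Num.Theory.
Local Open Scope ring_scope.
Local Open Scope classical_set_scope.

Section Defs.
Variable R : realType.

(* R^n is represented by n.-tuple R (which carries the product sigma-algebra
   of the Borel sigma-algebra on R). *)

(* A measure on R^n is the Lebesgue measure iff it gives every closed box its
   volume (this determines it uniquely). *)
Definition is_lebesgue (n : nat) (mu : set (n.-tuple R) -> \bar R) : Prop :=
  forall a b : n.-tuple R, (forall i, tnth a i <= tnth b i) ->
    mu [set z | forall i, tnth a i <= tnth z i <= tnth b i] =
    (\prod_(i < n) (tnth b i - tnth a i))%:E.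

Definition is_density (n : nat) (mu : {measure set (n.-tuple R) -> \bar R})
  (p : n.-tuple R -> R) : Prop :=
  [/\ measurable_fun setT p, (forall z, 0 <= p z) &
      (\int[mu]_z (p z)%:E = 1)%E].

Definition elog (a : R) : \bar R := if 0 < a then (ln a)%:E else -oo%E.

Definition tsub n (x y : n.-tuple R) : n.-tuple R :=
  [tuple tnth x i - tnth y i | i < n].

Definition dot k (a b : k.-tuple R) : R := \sum_(j < k) tnth a j * tnth b j.

Definition prior_density (dZ dU k : nat)
  (T : 'I_dZ -> R -> k.-tuple R) (lam : 'I_dZ -> dU.-tuple R -> k.-tuple R)
  (A : dU.-tuple R -> R) (B : R -> R) (u : dU.-tuple R) (z : dZ.-tuple R) : R :=
  \prod_(i < dZ) expR (dot (lam i u) (T i (tnth z i)) - A u + B (tnth z i)).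

Definition decoder_density (dZ dX : nat) (peps : dX.-tuple R -> R)
  (f : dZ.-tuple R -> dX.-tuple R) (x : dX.-tuple R) (z : dZ.-tuple R) : R :=
  peps (tsub x (f z)).

Definition expect_integrand n (m : n.-tuple R -> R) (h : n.-tuple R -> \bar R)
  (z : n.-tuple R) : \bar R := ((m z)%:E * h z)%E.

Definition expect n (mu : {measure set (n.-tuple R) -> \bar R})
  (m : n.-tuple R -> R) (h : n.-tuple R -> \bar R) : \bar R :=
  (\int[mu]_z expect_integrand m h z)%E.

Definition KL_integrand n (p q : n.-tuple R -> R) (z : n.-tuple R) : \bar R :=
  ((p z)%:E * (elog (p z) - elog (q z)))%E.

Definition KL n (mu : {measure set (n.-tuple R) -> \bar R})
  (p q : n.-tuple R -> R) : \bar R := (\int[mu]_z KL_integrand p q z)%E.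

Definition mixture n (a : R) (p q : n.-tuple R -> R) (z : n.-tuple R) : R :=
  a * p z + (1 - a) * q z.

Definition Dskew n (mu : {measure set (n.-tuple R) -> \bar R}) (beta : R)
  (p q : n.-tuple R -> R) : \bar R := KL mu p (mixture (1 - beta) p q).

Definition ELBO (dX dZ dU k : nat) (muZ : {measure set (dZ.-tuple R) -> \bar R})
  (peps : dX.-tuple R -> R) (f : dZ.-tuple R -> dX.-tuple R)
  (T : 'I_dZ -> R -> k.-tuple R) (lam : 'I_dZ -> dU.-tuple R -> k.-tuple R)
  (A : dU.-tuple R -> R) (B : R -> R)
  (qenc qpost : dZ.-tuple R -> R) (alpha : R)
  (x : dX.-tuple R) (u : dU.-tuple R) : \bar R :=
  (expect muZ (mixture alpha qenc qpost)
     (fun z => elog (decoder_density peps f x z))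
   - KL muZ (mixture alpha qenc qpost) (prior_density T lam A B u))%E.

End Defs.

(* Main.v *)
Require Import Defs.
From HB Require Import structures.
From mathcomp Require Import all_boot all_order all_algebra.
From mathcomp Require Import all_classical all_reals all_analysis.
Import Order.TTheory GRing.Theory Num.Theory.
Local Open Scope ring_scope.
Local Open Scope classical_set_scope.

From mathcomp Require Import ring lra.

Local Open Scope ring_scope.

Lemma elog_pos (R : realType) (M : R) : 0 < M -> elog M = (ln M)%:E.
Proof. by move=> M0; rewrite /elog M0. Qed.

Lemma elogP (R : realType) (P X : R) : 0 <= P ->
  (P%:E * (elog P - X%:E))%E = (P * (ln P - X))%:E.
Proof.
rewrite le_eqVlt => /orP[/eqP<-|P0]; first by rewrite mul0e mul0r.
by rewrite elog_pos // -EFinB -EFinM.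
Qed.

Lemma KLpt (R : realType) (a P M : R) : 0 <= a -> 0 <= P ->
  (0 < a -> 0 < P -> 0 < M) ->
  (a%:E * (P%:E * (elog P - elog M)))%E = (a * (P * (ln P - ln M)))%:E.
Proof.
rewrite le_eqVlt => /orP[/eqP<- _ _|a0]; first by rewrite mul0e mul0r.
rewrite le_eqVlt => /orP[/eqP<- _|P0 HM]; first by rewrite mul0e mule0 mul0r mulr0.
by rewrite [elog M]elog_pos ?(HM a0 P0) // elogP ?ltW // -EFinM.
Qed.

Lemma ealg (R : realType) (a : R) (e1 e0 k1 k0 d1 d2 : \bar R) :
  e1 \is a fin_num -> e0 \is a fin_num -> k1 \is a fin_num ->
  k0 \is a fin_num -> d1 \is a fin_num -> d2 \is a fin_num ->
  ((a%:E * e1 + (1 - a)%:E * e0) -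
   ((a%:E * k1 + (1 - a)%:E * k0) - (a%:E * d1 + (1 - a)%:E * d2)) =
  a%:E * (e1 - k1) + (1 - a)%:E * (e0 - k0) + a%:E * d1 + (1 - a)%:E * d2)%E.
Proof.
case: e1 => // e1 _; case: e0 => // e0 _; case: k1 => // k1 _;
case: k0 => // k0 _; case: d1 => // d1 _; case: d2 => // d2 _.
rewrite -!EFinM -!EFinB -!EFinD -?EFinM -?EFinB -?EFinD -?EFinB -?EFinD; congr EFin; ring.
Qed.

Theorem proposition5 (R : realType) (dX dZ dU k : nat)
  (muX : {measure set (dX.-tuple R) -> \bar R})
  (muZ : {measure set (dZ.-tuple R) -> \bar R})
  (peps : dX.-tuple R -> R)
  (f : dZ.-tuple R -> dX.-tuple R)
  (T : 'I_dZ -> R -> k.-tuple R) (lam : 'I_dZ -> dU.-tuple R -> k.-tuple R)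
  (A : dU.-tuple R -> R) (B : R -> R)
  (Phi : Type)
  (qenc : Phi -> dX.-tuple R -> dZ.-tuple R -> R)
  (qpost : Phi -> dX.-tuple R -> dU.-tuple R -> dZ.-tuple R -> R)
  (phi : Phi) (x : dX.-tuple R) (u : dU.-tuple R) (alpha : R) :
  (dZ < dX)%N ->
  is_lebesgue muX -> is_lebesgue muZ ->
  is_density muX peps ->
  (forall u', is_density muZ (prior_density T lam A B u')) ->
  (forall x', is_density muZ (qenc phi x')) ->
  (forall x' u', is_density muZ (qpost phi x' u')) ->
  0 <= alpha <= 1 ->
  (* all expectations and divergences appearing are finite *)
  (forall a, a \in [:: alpha; 1; 0] ->
     muZ.-integrable setT
       (expect_integrand (mixture a (qenc phi x) (qpost phi x u))
          (fun z => elog (decoder_density peps f x z))) /\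
     muZ.-integrable setT
       (KL_integrand (mixture a (qenc phi x) (qpost phi x u))
          (prior_density T lam A B u))) ->
  muZ.-integrable setT
    (KL_integrand (qenc phi x) (mixture (1 - (1 - alpha)) (qenc phi x) (qpost phi x u))) ->
  muZ.-integrable setT
    (KL_integrand (qpost phi x u) (mixture (1 - alpha) (qpost phi x u) (qenc phi x))) ->
  ELBO muZ peps f T lam A B (qenc phi x) (qpost phi x u) alpha x u =
  (alpha%:E * ELBO muZ peps f T lam A B (qenc phi x) (qpost phi x u) 1 x u
   + (1 - alpha)%:E * ELBO muZ peps f T lam A B (qenc phi x) (qpost phi x u) 0 x u
   + alpha%:E * Dskew muZ (1 - alpha) (qenc phi x) (qpost phi x u)
   + (1 - alpha)%:E * Dskew muZ alpha (qpost phi x u) (qenc phi x))%E.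
Proof.
move=> _ _ _ _ Hpr Hqe Hqp /andP[a0 a1] Hin iD1 iD2.
set p := qenc phi x. set q := qpost phi x u. set pr := prior_density T lam A B u.
set g := fun z => elog (decoder_density peps f x z).
have p0 : forall z, 0 <= p z by case: (Hqe x).
have q0 : forall z, 0 <= q z by case: (Hqp x u).
have pr0 : forall z, 0 < pr z.
  by move=> z; rewrite /pr /prior_density; apply: prodr_gt0 => i _; exact: expR_gt0.
have mix1 : mixture 1 p q = p.
  by apply: funext => z; rewrite /mixture subrr mul0r addr0 mul1r.
have mix0 : mixture 0 p q = q.
  by apply: funext => z; rewrite /mixture subr0 mul0r add0r mul1r.
have mixA : mixture (1 - (1 - alpha)) p q = mixture alpha p q.
  by rewrite opprB addrC subrK.
have mixB : mixture (1 - alpha) q p = mixture alpha p q.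
  by apply: funext => z; rewrite /mixture; ring.
case: (Hin alpha) => [|iEa iKa]; first by rewrite !inE eqxx.
case: (Hin 1) => [|iE1 iK1]; first by rewrite !inE eqxx orbT.
case: (Hin 0) => [|iE0 iK0]; first by rewrite !inE eqxx !orbT.
rewrite mix1 in iE1 iK1; rewrite mix0 in iE0 iK0.
rewrite mixA in iD1; rewrite mixB in iD2.
rewrite /ELBO /Dskew mix1 mix0 mixA mixB.
set m := mixture alpha p q.
have a1' : 0 <= 1 - alpha by rewrite subr_ge0.
have m0 : forall z, 0 <= m z.
  by move=> z; rewrite /m /mixture; apply: addr_ge0; apply: mulr_ge0 => //; rewrite subr_ge0.
have E : expect muZ m g =
   (alpha%:E * expect muZ p g + (1 - alpha)%:E * expect muZ q g)%E.
  rewrite /expect.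
  transitivity (\int[muZ]_z (alpha%:E * expect_integrand p g z +
                             (1 - alpha)%:E * expect_integrand q g z))%E.
    apply: eq_integral => z _.
    rewrite /expect_integrand /m /mixture EFinD ge0_muleDl ?EFinM ?muleA //.
      by rewrite lee_fin mulr_ge0.
    by rewrite lee_fin mulr_ge0 // subr_ge0.
  rewrite integralD //; [|exact: integrableZl|exact: integrableZl].
  by rewrite !integralZl.
have K : KL muZ m pr =
   ((alpha%:E * KL muZ p pr + (1 - alpha)%:E * KL muZ q pr) -
    (alpha%:E * KL muZ p m + (1 - alpha)%:E * KL muZ q m))%E.
  rewrite /KL.
  transitivity (\int[muZ]_z ((alpha%:E * KL_integrand p pr z +
                             (1 - alpha)%:E * KL_integrand q pr z) -
                (alpha%:E * KL_integrand p m z +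
                             (1 - alpha)%:E * KL_integrand q m z)))%E.
    apply: eq_integral => z _.
    have mP : 0 < alpha -> 0 < p z -> 0 < m z.
      move=> ha hp; have := mulr_gt0 ha hp.
      have := mulr_ge0 a1' (q0 z).
      by rewrite /m /mixture; lra.
    have mQ : 0 < 1 - alpha -> 0 < q z -> 0 < m z.
      move=> ha hp; have := mulr_gt0 ha hp.
      have := mulr_ge0 a0 (p0 z).
      by rewrite /m /mixture; lra.
    rewrite /KL_integrand [elog (pr z)]elog_pos ?pr0 // !elogP //.
    rewrite (@KLpt _ _ _ _ a0 (p0 z) mP).
    rewrite (@KLpt _ _ _ _ a1' (q0 z) mQ).
    rewrite -!EFinM -!EFinD; congr EFin.
    move: (ln (m z)) (ln (pr z)) (ln (p z)) (ln (q z)) => lm lpr lp lq.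
    have -> : m z = alpha * p z + (1 - alpha) * q z by [].
    move: (p z) (q z) => P Q; ring.
  rewrite integralB //; last 2 first.
      by apply: integrableD => //; exact: integrableZl.
    by apply: integrableD => //; exact: integrableZl.
  rewrite integralD //; [|exact: integrableZl|exact: integrableZl].
  rewrite integralD //; [|exact: integrableZl|exact: integrableZl].
  by rewrite !integralZl.
rewrite E K; apply: ealg; exact: integrable_fin_num.
Qed.
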